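(* Let $\lambda=(\lambda_1\ge\cdots\ge\lambda_n)$ be a partition with positive parts, $m=\lambda_1$, and let $\mathbf T_\lambda=\{(i,j):1\le i\le n,\ 1\le j\le\lambda_i\}$. Let $I_2(\mathbf T_\lambda)\subset K[\mathbf T_\lambda]$ be the ideal generated by the 2-minors of $\mathbf T_\lambda$, and let $L\subset K[\mathbf T_\lambda]$ be the ideal generated by the diagonal sums $$\sum_{i\ge1,\ (i,k+i)\in\mathbf T_\lambda}T_{i,k+i}\ (k=0,\dots,m-1),\qquad\sum_{i\ge1,\ (k+i,i)\in\mathbf T_\lambda}T_{k+i,i}\ (k=1,\dots,n-1).$$ Let $\prec$ be the reverse-lexicographic term order induced by $T_{1,1}>T_{1,2}>\cdots>T_{1,\lambda_1}>T_{2,1}>\cdots>T_{2,\lambda_2}>\cdots>T_{n,\lambda_n}$. Then $T_{ij}^j\in\mathrm{in}_\prec(I_2(\mathbf T_\lambda)+L)$ for every $(i,j)\in\mathbf T_\lambda$.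
   Context: $K$ is a field; $K[\mathbf T_\lambda]$ is the polynomial ring over $K$ in variables $T_{ij}$, $(i,j)\in\mathbf T_\lambda$. A 2-minor of $\mathbf T_\lambda$ is $T_{ij}T_{kl}-T_{il}T_{kj}$ with $i<k$, $j<l$ and $(i,j),(i,l),(k,j),(k,l)\in\mathbf T_\lambda$. *)

(* Defs.v *)
From HB Require Import structures.
From mathcomp Require Import all_boot all_order all_algebra.
Set Implicit Arguments. Unset Strict Implicit. Unset Printing Implicit Defensive.
Import Order.TTheory GRing.Theory Num.Theory.
Local Open Scope ring_scope.

(* mpoly R n = R[X_0,...,X_{n-1}]; the last variable X_{n-1} is outermost. *)
Fixpoint mpoly (R : comNzRingType) (n : nat) : comNzRingType :=
  if n is n'.+1 then ({poly mpoly R n'} : comNzRingType) else R.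

(* the variable X_k of mpoly R n (k < n; junk value 0 if k >= n) *)
Fixpoint mvar (R : comNzRingType) (n : nat) (k : nat) : mpoly R n :=
  match n return mpoly R n with
  | 0 => 0
  | n'.+1 => if k == n' then ('X : {poly mpoly R n'}) else (mvar R n' k)%:P
  end.

Definition expo_ok (n : nat) (e : nat -> nat) : Prop := forall k, (n <= k)%N -> e k = 0%N.

Definition mmono (R : comNzRingType) (n : nat) (e : nat -> nat) : mpoly R n :=
  \prod_(k < n) mvar R n k ^+ e k.

Fixpoint mcoef (R : comNzRingType) (n : nat) : mpoly R n -> (nat -> nat) -> R :=
  match n return mpoly R n -> (nat -> nat) -> R with
  | 0 => fun p _ => p
  | n'.+1 => fun p e => mcoef (n := n') ((p : {poly mpoly R n'})`_(e n')) e
  end.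

Definition mdeg (n : nat) (e : nat -> nat) : nat := (\sum_(k < n) e k)%N.

(* degree reverse-lexicographic order with X_0 > X_1 > ... > X_{n-1}:
   e1 < e2 iff deg e1 < deg e2, or the degrees agree and the last
   nonzero entry of e2 - e1 is negative. *)
Definition revlex_lt (n : nat) (e1 e2 : nat -> nat) : Prop :=
  (mdeg n e1 < mdeg n e2)%N \/
  (mdeg n e1 = mdeg n e2 /\
   exists k, [/\ (k < n)%N, (e2 k < e1 k)%N &
                 forall l, (k < l)%N -> (l < n)%N -> e1 l = e2 l]).

Definition is_initial_mono (R : comNzRingType) (n : nat) (f u : mpoly R n) : Prop :=
  exists e, [/\ expo_ok n e, mcoef f e != 0, u = mmono R n e &
    forall e', expo_ok n e' -> mcoef f e' != 0 ->
      (exists2 k, (k < n)%N & e' k <> e k) -> revlex_lt n e' e].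

Definition ideal_gen (R : comNzRingType) (S : R -> Prop) (f : R) : Prop :=
  exists s : seq (R * R), (forall p, p \in s -> S p.2) /\
    f = \sum_(p <- s) p.1 * p.2.

Definition initial_ideal (R : comNzRingType) (n : nat) (I : mpoly R n -> Prop)
  : mpoly R n -> Prop :=
  ideal_gen (fun u => exists2 f, I f & is_initial_mono f u).

Definition is_partition (lam : seq nat) : bool :=
  sorted (fun a b => b <= a)%N lam && all (fun a => 0 < a)%N lam.

Definition cell (lam : seq nat) (i j : nat) : bool :=
  [&& (1 <= i)%N, (i <= size lam)%N, (1 <= j)%N & (j <= nth 0 lam i.-1)%N].

Definition ncells (lam : seq nat) : nat := sumn lam.

(* position of cell (i,j) in the order T_{1,1}, T_{1,2}, ..., T_{n,lambda_n} *)
Definition cidx (lam : seq nat) (i j : nat) : nat := (sumn (take i.-1 lam) + j.-1)%N.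

Definition Tv (K : fieldType) (lam : seq nat) (i j : nat) : mpoly K (ncells lam) :=
  mvar K (ncells lam) (cidx lam i j).

Definition two_minor (K : fieldType) (lam : seq nat) (f : mpoly K (ncells lam)) : Prop :=
  exists i j k l, [/\ (i < k)%N, (j < l)%N,
    [&& cell lam i j, cell lam i l, cell lam k j & cell lam k l] &
    f = Tv K lam i j * Tv K lam k l - Tv K lam i l * Tv K lam k j].

Definition diag_sum (K : fieldType) (lam : seq nat) (f : mpoly K (ncells lam)) : Prop :=
  (exists2 k, (k < head 0%N lam)%N &
     f = \sum_(1 <= i < (size lam).+1 | cell lam i (k + i)) Tv K lam i (k + i)) \/
  (exists2 k, (1 <= k < size lam)%N &
     f = \sum_(1 <= i < (size lam).+1 | cell lam (k + i) i) Tv K lam (k + i) i).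

Definition I2L (K : fieldType) (lam : seq nat) : mpoly K (ncells lam) -> Prop :=
  ideal_gen (fun f => two_minor f \/ diag_sum f).
Arguments two_minor K lam f : clear implicits.
Arguments diag_sum K lam f : clear implicits.
Arguments I2L K lam f : clear implicits.

(* Main.v *)
Require Import Defs.
From HB Require Import structures.
From mathcomp Require Import all_boot all_order all_algebra zify ring.
Set Implicit Arguments. Unset Strict Implicit. Unset Printing Implicit Defensive.
Import Order.TTheory GRing.Theory Num.Theory.
Local Open Scope ring_scope.

Lemma mcoef_ext (R : comNzRingType) n (p : mpoly R n) e e' :
  (forall l, (l < n)%N -> e l = e' l) -> mcoef p e = mcoef p e'.
Proof.
elim: n p => [|n IH] p H //=.
rewrite H // (IH _ ) // => l hl; apply: H; exact: ltnW.
Qed.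

Lemma mcoefD (R : comNzRingType) n (p q : mpoly R n) e :
  mcoef (p + q) e = mcoef p e + mcoef q e.
Proof. elim: n p q => [|n IH] p q //=. by rewrite coefD IH. Qed.

Lemma mcoef0 (R : comNzRingType) n e : mcoef (0 : mpoly R n) e = 0.
Proof. elim: n => [|n IH] //=. by rewrite coef0 IH. Qed.

Lemma mcoefN (R : comNzRingType) n (p : mpoly R n) e :
  mcoef (- p) e = - mcoef p e.
Proof. elim: n p => [|n IH] p //=. by rewrite coefN IH. Qed.

Lemma mcoefB (R : comNzRingType) n (p q : mpoly R n) e :
  mcoef (p - q) e = mcoef p e - mcoef q e.
Proof. by rewrite mcoefD mcoefN. Qed.

Fixpoint eqon (n : nat) (e e' : nat -> nat) : bool :=
  if n is n'.+1 then (e n' == e' n') && eqon n' e e' else true.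

Lemma eqonP n e e' : reflect (forall l, (l < n)%N -> e l = e' l) (eqon n e e').
Proof.
elim: n => [|n IH] /=; first by constructor.
apply: (iffP andP) => [[/eqP h /IH h'] l|h].
  by rewrite ltnS leq_eqVlt => /orP[/eqP->//|]; apply: h'.
split; first by apply/eqP/h.
by apply/IH => l hl; apply: h; apply: ltnW.
Qed.

Lemma mcoef1 (R : comNzRingType) n e :
  mcoef (1 : mpoly R n) e = if eqon n e (fun _ => 0%N) then 1 else 0.
Proof.
elim: n => [|n IH] //=.
rewrite coef1; case: eqP => _ /=; first by rewrite IH.
by rewrite mcoef0.
Qed.

Definition e0 (c j : nat) : nat -> nat := fun l => if l == c then j else 0%N.

Lemma mcoef_mvarX (R : comNzRingType) n c j e : (c < n)%N ->
  mcoef (mvar R n c ^+ j) e = if eqon n e (e0 c j) then 1 else 0.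
Proof.
elim: n => [|n IH] //= hc.
case: eqP => [->|hcn].
  have -> : ('X : {poly mpoly R n}) ^+ j = 'X^j by [].
  rewrite coefXn /e0 eqxx.
  have -> : eqon n e (fun l => if l == n then j else 0%N) = eqon n e (fun _ => 0%N).
    apply/eqonP/eqonP => h l hl; rewrite h //; by rewrite (ltn_eqF hl).
  case: eqP => _ /=; first by rewrite mcoef1.
  by rewrite mcoef0.
have hc' : (c < n)%N by rewrite ltnS leq_eqVlt in hc; case/orP: hc => // /eqP.
rewrite -rmorphXn coefC.
have -> : e0 c j n = 0%N by rewrite /e0; case: eqP => // h; case: hcn.
case: eqP => _ /=; first by rewrite IH.
by rewrite mcoef0.
Qed.
Definition Supp (R : comNzRingType) n (p : mpoly R n) (P : (nat -> nat) -> Prop) :=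
  forall e, mcoef p e != 0 -> P e.

Lemma Supp0 (R : comNzRingType) n P : Supp (0 : mpoly R n) P.
Proof. by move=> e; rewrite mcoef0 eqxx. Qed.

Lemma SuppD (R : comNzRingType) n (p q : mpoly R n) P :
  Supp p P -> Supp q P -> Supp (p + q) P.
Proof.
move=> hp hq e; rewrite mcoefD.
case: (boolP (mcoef p e == 0)) => [/eqP->|/hp//]; rewrite add0r; exact: hq.
Qed.

Lemma SuppN (R : comNzRingType) n (p : mpoly R n) P :
  Supp p P -> Supp (- p) P.
Proof. by move=> hp e; rewrite mcoefN oppr_eq0; apply: hp. Qed.

Lemma SuppW (R : comNzRingType) n (p : mpoly R n) (P Q : (nat -> nat) -> Prop) :
  (forall e, P e -> Q e) -> Supp p P -> Supp p Q.
Proof. by move=> h hp e /hp /h. Qed.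

Lemma Supp_big (R : comNzRingType) n (I : Type) (r : seq I) (P : pred I)
   (F : I -> mpoly R n) Q :
  (forall x, P x -> Supp (F x) Q) -> Supp (\sum_(x <- r | P x) F x) Q.
Proof.
move=> h; apply: (big_ind (fun p => Supp p Q)); [exact: Supp0| |exact: h].
by move=> x y; apply: SuppD.
Qed.

Definition splits n (e e1 e2 : nat -> nat) := forall l, (l < n)%N -> e l = (e1 l + e2 l)%N.

Lemma Supp_mul0 (R : comNzRingType) n (p q : mpoly R n) :
  Supp (p * q) (fun e => exists e1 e2, [/\ mcoef p e1 != 0, mcoef q e2 != 0 & splits n e e1 e2]).
Proof.
elim: n p q => [|n IH] p q e /=.
  move=> h; exists e, e; split => //.
  - by apply: contraNneq h => ->; rewrite mul0r.
  - by apply: contraNneq h => ->; rewrite mulr0.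
rewrite coefM => h.
pose Q := fun e' : nat -> nat => exists e1 e2, [/\ mcoef p e1 != 0, mcoef q e2 != 0 &
    forall l, (l < n.+1)%N -> (if l == n then e n else e' l) = (e1 l + e2 l)%N].
have HS : Supp (\sum_(j < (e n).+1) p`_j * q`_(e n - j)) Q.
  apply: Supp_big => a _ e' /IH [e1 [e2 [h1 h2 hs]]].
  exists (fun l => if l == n then nat_of_ord a else e1 l),
         (fun l => if l == n then (e n - a)%N else e2 l); split.
  - by rewrite /= eqxx (@mcoef_ext _ _ _ _ e1) // => l hl; rewrite (ltn_eqF hl).
  - by rewrite /= eqxx (@mcoef_ext _ _ _ _ e2) // => l hl; rewrite (ltn_eqF hl).
  - move=> l hl; case: eqP => [_|hln]; first by rewrite subnKC // -ltnS.
    apply: hs; by rewrite ltnS leq_eqVlt in hl; case/orP: hl => // /eqP.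
case: (HS e h) => e1 [e2 [h1 h2 hs]]; exists e1, e2; split => // l hl.
by rewrite -hs //; case: eqP => // ->.
Qed.

Definition mulP n (P Q : (nat -> nat) -> Prop) e :=
  exists e1 e2, [/\ P e1, Q e2 & splits n e e1 e2].

Lemma Supp_mul (R : comNzRingType) n (p q : mpoly R n) P Q :
  Supp p P -> Supp q Q -> Supp (p * q) (mulP n P Q).
Proof.
move=> hp hq e /Supp_mul0 [e1 [e2 [h1 h2 hs]]].
by exists e1, e2; split => //; [apply: hp|apply: hq].
Qed.

Lemma ideal0 (R : comNzRingType) (G : R -> Prop) : ideal_gen G 0.
Proof. by exists [::]; split => //; rewrite big_nil. Qed.

Lemma ideal_el (R : comNzRingType) (G : R -> Prop) g : G g -> ideal_gen G g.
Proof.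
move=> hg; exists [:: (1, g)]; split; first by move=> p; rewrite inE => /eqP->.
by rewrite big_cons big_nil mul1r addr0.
Qed.

Lemma idealD (R : comNzRingType) (G : R -> Prop) f g :
  ideal_gen G f -> ideal_gen G g -> ideal_gen G (f + g).
Proof.
case=> [s1 [h1 ->]] [s2 [h2 ->]]; exists (s1 ++ s2); split; last by rewrite big_cat.
by move=> p; rewrite mem_cat => /orP[/h1|/h2].
Qed.

Lemma idealM (R : comNzRingType) (G : R -> Prop) q f :
  ideal_gen G f -> ideal_gen G (q * f).
Proof.
case=> [s [h ->]]; exists [seq (q * p.1, p.2) | p <- s]; split.
  by move=> p /mapP [x hx ->] /=; apply: h.
by rewrite big_map mulr_sumr; apply: eq_bigr => p _; rewrite mulrA.
Qed.

Lemma idealN (R : comNzRingType) (G : R -> Prop) f :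
  ideal_gen G f -> ideal_gen G (- f).
Proof. by move=> h; rewrite -mulN1r; apply: idealM. Qed.

Definition Mod (K : fieldType) lam (p : mpoly K (ncells lam)) P :=
  exists f, I2L K lam f /\ Supp (p - f) P.

Lemma Mod_ideal (K : fieldType) lam p P : I2L K lam p -> Mod p P.
Proof. by move=> h; exists p; split => //; rewrite subrr; apply: Supp0. Qed.

Lemma Mod_supp (K : fieldType) lam (p : mpoly K (ncells lam)) P : Supp p P -> Mod p P.
Proof. by move=> h; exists 0; split; [apply: ideal0|rewrite subr0]. Qed.

Lemma ModD (K : fieldType) lam (p q : mpoly K (ncells lam)) P :
  Mod p P -> Mod q P -> Mod (p + q) P.
Proof.
case=> [f [hf hp]] [g [hg hq]]; exists (f + g); split; first exact: idealD.
by rewrite opprD addrACA; apply: SuppD.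
Qed.

Lemma ModN (K : fieldType) lam (p : mpoly K (ncells lam)) P :
  Mod p P -> Mod (- p) P.
Proof.
case=> [f [hf hp]]; exists (- f); split; first exact: idealN.
by rewrite -opprD; apply: SuppN.
Qed.

Lemma ModW (K : fieldType) lam (p : mpoly K (ncells lam)) (P Q : (nat -> nat) -> Prop) :
  (forall e, P e -> Q e) -> Mod p P -> Mod p Q.
Proof. by move=> h [f [hf hp]]; exists f; split => //; apply: SuppW hp. Qed.

Lemma ModM (K : fieldType) lam (q p : mpoly K (ncells lam)) Q P :
  Supp q Q -> Mod p P -> Mod (q * p) (mulP (ncells lam) Q P).
Proof.
move=> hq [f [hf hp]]; exists (q * f); split; first exact: idealM.
by rewrite -mulrBr; apply: Supp_mul.
Qed.

Lemma Mod_big (K : fieldType) lam (I : Type) (r : seq I) (P : pred I)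
   (F : I -> mpoly K (ncells lam)) Q :
  (forall x, P x -> Mod (F x) Q) -> Mod (\sum_(x <- r | P x) F x) Q.
Proof.
move=> h; apply: (big_ind (fun p => Mod p Q)); [|by move=> x y; apply: ModD|exact: h].
by apply: Mod_ideal; apply: ideal0.
Qed.

Definition Dg n k (e : nat -> nat) := mdeg n e = k.
Definition DL n c k (e : nat -> nat) :=
  mdeg n e = k /\ exists l, [/\ (c < l)%N, (l < n)%N & (0 < e l)%N].

Lemma mdeg_split n e e1 e2 : splits n e e1 e2 -> mdeg n e = (mdeg n e1 + mdeg n e2)%N.
Proof. by move=> h; rewrite /mdeg -big_split /=; apply: eq_bigr => l _; apply: h. Qed.

Lemma mulP_DD n a b e : mulP n (Dg n a) (Dg n b) e -> Dg n (a + b) e.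
Proof. by case=> e1 [e2 [h1 h2 hs]]; rewrite /Dg (mdeg_split hs) h1 h2. Qed.

Lemma mulP_DDL n c a b e : mulP n (Dg n a) (DL n c b) e -> DL n c (a + b) e.
Proof.
case=> e1 [e2 [h1 [h2 [l [hl1 hl2 hl3]]] hs]]; split; first by rewrite (mdeg_split hs) h1 h2.
by exists l; split => //; rewrite hs // ltn_addl.
Qed.

Lemma mulP_DLD n c a b e : mulP n (DL n c a) (Dg n b) e -> DL n c (a + b) e.
Proof.
case=> e1 [e2 [[h1 [l [hl1 hl2 hl3]]] h2 hs]]; split; first by rewrite (mdeg_split hs) h1 h2.
by exists l; split => //; rewrite hs // ltn_addr.
Qed.

Lemma mdeg_eqon n e e' : eqon n e e' -> mdeg n e = mdeg n e'.
Proof. by move/eqonP=> h; apply: eq_bigr => l _; apply: h. Qed.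

Lemma mdeg_e0 n c j : (c < n)%N -> mdeg n (e0 c j) = j.
Proof.
move=> hc; rewrite /mdeg (bigD1 (Ordinal hc)) //= /e0 eqxx big1 ?addn0 //.
by move=> k hk; case: eqP => // h; case/eqP: hk; apply: val_inj.
Qed.

Lemma Supp_mvar (R : comNzRingType) n c : (c < n)%N -> Supp (mvar R n c) (Dg n 1).
Proof.
move=> hc e; rewrite -(expr1 (mvar R n c)) mcoef_mvarX //.
by case: ifP => [h _|]; [rewrite /Dg (mdeg_eqon h) mdeg_e0|rewrite eqxx].
Qed.

Lemma Supp_mvarL (R : comNzRingType) n c c' : (c < c')%N -> (c' < n)%N ->
  Supp (mvar R n c') (DL n c 1).
Proof.
move=> hc hc' e; rewrite -(expr1 (mvar R n c')) mcoef_mvarX //.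
case: ifP => [h _|]; last by rewrite eqxx.
split; first by rewrite (mdeg_eqon h) mdeg_e0.
by exists c'; split => //; move/eqonP: h => ->; rewrite // /e0 eqxx.
Qed.

Lemma Supp1 (R : comNzRingType) n : Supp (1 : mpoly R n) (Dg n 0).
Proof.
move=> e; rewrite mcoef1; case: ifP => [h _|]; last by rewrite eqxx.
rewrite /Dg (mdeg_eqon h) /mdeg big1 //.
Qed.

Lemma lam_mono lam a a' : is_partition lam -> (1 <= a)%N -> (a <= a')%N ->
  (a' <= size lam)%N -> (nth 0 lam a'.-1 <= nth 0 lam a.-1)%N.
Proof.
case/andP=> hs _ h1 h2 h3.
have := sorted_leq_nth (leT := fun a b : nat => (b <= a)%N) _ _ 0 hs.
apply => //.
- by move=> x y z /= h h'; apply: leq_trans h.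
- by rewrite inE prednK // (leq_trans h2 h3).
- by rewrite inE prednK ?(leq_trans h1 h2) // (leq_trans h2 h3).
- by rewrite -!subn1 leq_sub2r.
Qed.

Lemma sumn_take_le m m' (s : seq nat) : (m <= m')%N -> (sumn (take m s) <= sumn (take m' s))%N.
Proof.
elim: s m m' => [|x s IH] [|m] [|m'] //= h.
by rewrite leq_add2l; apply: IH.
Qed.

Lemma sumn_take_nth a (s : seq nat) : (a < size s)%N ->
  sumn (take a.+1 s) = (sumn (take a s) + nth 0 s a)%N.
Proof.
elim: s a => [|x s IH] [|a] //= h; first by rewrite take0 /= addn0.
by rewrite IH // addnA.
Qed.

Lemma sumn_take_all m (s : seq nat) : (sumn (take m s) <= sumn s)%N.
Proof. by rewrite -{2}(cat_take_drop m s) sumn_cat leq_addr. Qed.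

Lemma cidx_lt lam a x : cell lam a x -> (cidx lam a x < ncells lam)%N.
Proof.
case/and4P=> h1 h2 h3 h4; rewrite /cidx /ncells.
have ha : (a.-1 < size lam)%N by rewrite prednK.
apply: (@leq_trans (sumn (take a.-1.+1 lam))); last exact: sumn_take_all.
rewrite sumn_take_nth // ltn_add2l prednK //.
Qed.

Lemma cidx_row lam i j r y : cell lam i j -> cell lam r y -> (i < r)%N ->
  (cidx lam i j < cidx lam r y)%N.
Proof.
case/and4P=> h1 h2 h3 h4 /and4P [g1 g2 g3 g4] hir; rewrite /cidx.
have ha : (i.-1 < size lam)%N by rewrite prednK.
apply: (@leq_trans (sumn (take i.-1.+1 lam))).
  by rewrite sumn_take_nth // ltn_add2l prednK.
apply: leq_trans (leq_addr _ _); apply: sumn_take_le.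
by rewrite prednK // -ltnS prednK // (leq_trans h1 hir).
Qed.

Lemma cancel3 (R : zmodType) (a t r : R) : a + (t + r) - t - a = r.
Proof. by rewrite addrCA (addrC t) addrK (addrC a) addrK. Qed.

Lemma diag_decomp (K : fieldType) lam i j b : is_partition lam -> cell lam i j -> cell lam i b ->
 exists S, (two_minor K lam S \/ diag_sum K lam S) /\ exists As : seq (nat * nat),
   (forall p, p \in As -> [/\ (p.1 < i)%N, (p.2 + i = b + p.1)%N & cell lam p.1 p.2]) /\
   Supp (S - Tv K lam i b - \sum_(p <- As) Tv K lam p.1 p.2) (DL (ncells lam) (cidx lam i j) 1).
Proof.
move=> hlam hij hb; have hb' := hb; case/and4P: hb' => h1 h2 h3 h4.
have hRow : forall r y, cell lam r y -> (i < r)%N ->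
    Supp (Tv K lam r y) (DL (ncells lam) (cidx lam i j) 1).
  move=> r y hry hir; apply: Supp_mvarL; last exact: cidx_lt.
  exact: cidx_row hij hry hir.
case: (leqP i b) => hib.
- pose k := (b - i)%N.
  pose S := \sum_(1 <= i' < (size lam).+1 | cell lam i' (k + i')) Tv K lam i' (k + i').
  exists S; split.
    right; left; exists k => //.
    have hl := lam_mono hlam (leqnn 1) h1 h2.
    rewrite -nth0; apply: leq_trans hl; rewrite /k; lia.
  exists [seq (a, (k + a)%N) | a <- [seq a <- index_iota 1 i | cell lam a (k + a)]]; split.
    move=> p /mapP [a]; rewrite mem_filter mem_index_iota => /andP [hc /andP [ha1 ha2]] -> /=.
    split => //; rewrite /k; lia.
  have e1 : (1 <= i)%N by lia.
  have e2 : (i <= (size lam).+1)%N by lia.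
  have e3 : (i <= i.+1)%N by lia.
  have e4 : (i.+1 <= (size lam).+1)%N by lia.
  rewrite big_map big_filter /S (@big_cat_nat _ _ _ i 1 (size lam).+1 _ _ e1 e2).
  rewrite (@big_cat_nat _ _ _ i.+1 i (size lam).+1 _ _ e3 e4) /= [X in _ + (X + _)]big_mkcond big_nat1 /=.
  have -> : (k + i)%N = b by rewrite /k subnK.
  rewrite hb.
  rewrite cancel3 big_nat_cond; apply: Supp_big => r /andP [/andP [hr _] hc].
  exact: hRow hc hr.
- pose k := (i - b)%N.
  pose S := \sum_(1 <= i' < (size lam).+1 | cell lam (k + i') i') Tv K lam (k + i') i'.
  exists S; split.
    right; right; exists k => //; rewrite /k; apply/andP; split; lia.
  exists [seq ((k + x)%N, x) | x <- [seq x <- index_iota 1 b | cell lam (k + x) x]]; split.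
    move=> p /mapP [a]; rewrite mem_filter mem_index_iota => /andP [hc /andP [ha1 ha2]] -> /=.
    split => //; rewrite /k; lia.
  have e1 : (1 <= b)%N by lia.
  have e2 : (b <= (size lam).+1)%N by lia.
  have e3 : (b <= b.+1)%N by lia.
  have e4 : (b.+1 <= (size lam).+1)%N by lia.
  rewrite big_map big_filter /S (@big_cat_nat _ _ _ b 1 (size lam).+1 _ _ e1 e2).
  rewrite (@big_cat_nat _ _ _ b.+1 b (size lam).+1 _ _ e3 e4) /= [X in _ + (X + _)]big_mkcond big_nat1 /=.
  have -> : (k + b)%N = i by rewrite /k subnK // ltnW.
  rewrite hb.
  rewrite cancel3 big_nat_cond; apply: Supp_big => r /andP [/andP [hr _] hc].
  apply: hRow hc _; rewrite /k; lia.
Qed.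

Lemma id1 (R : comNzRingType) (s a t p : R) : t * p = s * p - a * p - (s - t - a) * p.
Proof. ring. Qed.

Lemma id2 (R : comNzRingType) (ax ic ac ix pr : R) :
  ax * (ic * pr) = ac * (ix * pr) + (ax * ic - ac * ix) * pr.
Proof. ring. Qed.

Lemma swap_ideal (K : fieldType) lam a i x y : (a < i)%N ->
  cell lam a x -> cell lam a y -> cell lam i x -> cell lam i y ->
  I2L K lam (Tv K lam a x * Tv K lam i y - Tv K lam a y * Tv K lam i x).
Proof.
move=> hai h1 h2 h3 h4; case: (ltngtP x y) => hxy.
- apply: ideal_el; left; exists a, x, i, y; split => //; by rewrite h1 h2 h3 h4.
- rewrite -opprB; apply: idealN; apply: ideal_el; left; exists a, y, i, x; split => //.
  by rewrite h1 h2 h3 h4.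
- by rewrite hxy subrr; apply: ideal0.
Qed.

Lemma Supp_prod (K : fieldType) lam i bs : all (cell lam i) bs ->
  Supp (\prod_(x <- bs) Tv K lam i x) (Dg (ncells lam) (size bs)).
Proof.
elim: bs => [|x bs IH] /=; first by rewrite big_nil => _; apply: Supp1.
case/andP=> hx hbs; rewrite big_cons.
apply: (SuppW _ (Supp_mul (Supp_mvar (cidx_lt hx)) (IH hbs))) => e.
by move/mulP_DD; rewrite add1n.
Qed.

Lemma step (K : fieldType) lam i j (hlam : is_partition lam) (hij : cell lam i j)
  k b bs : size bs = k -> cell lam i b -> (b <= k.+1)%N -> all (cell lam i) bs ->
  (forall x c' rest, bs = c' :: rest -> cell lam i x -> (x < b)%N ->
     Mod (Tv K lam i x * \prod_(y <- rest) Tv K lam i y) (DL (ncells lam) (cidx lam i j) k)) ->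
  Mod (Tv K lam i b * \prod_(y <- bs) Tv K lam i y) (DL (ncells lam) (cidx lam i j) k.+1).
Proof.
move=> hs hb hbk hall IHp.
have [S [hS [As [hAs hE]]]] := diag_decomp K hlam hij hb.
rewrite (id1 S (\sum_(p <- As) Tv K lam p.1 p.2)).
apply: ModD; first apply: ModD.
- by apply: Mod_ideal; rewrite mulrC; apply: idealM; apply: ideal_el.
- apply: ModN; rewrite big_distrl big_seq /=; apply: Mod_big => -[a x] /hAs /= [hp1 hp2 hp3].
  have hb' := hb; case/and4P: hb' => b1 b2 b3 b4.
  have hp3' := hp3; case/and4P: hp3' => q1 q2 q3 q4.
  case: bs hs hall IHp => [|c' rest] hs hall IHp.
    move: hs => /= hk; rewrite -hk in hbk; exfalso; lia.
  move: hall => /= /andP [hc hrest].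
  have hc' := hc; case/and4P: hc' => c1 c2 c3 c4.
  rewrite big_cons (id2 _ _ (Tv K lam a c') (Tv K lam i x)) /=; apply: ModD.
  + have hix : cell lam i x.
      apply/and4P; split => //; apply: leq_trans b4; apply: ltnW; lia.
    apply: (ModW _ (ModM (Supp_mvar (cidx_lt (_ : cell lam a c'))) (IHp _ _ _ erefl hix _))).
    * by move=> e /mulP_DDL; rewrite add1n.
    * apply/and4P; split => //.
      apply: leq_trans c4 _; apply: lam_mono => //; lia.
    * lia.
  + apply: Mod_ideal; rewrite mulrC; apply: idealM; apply: swap_ideal => //.
    * apply/and4P; split => //.
      apply: leq_trans c4 _; apply: lam_mono => //; lia.
    * apply/and4P; split => //; lia.
- apply: ModN; apply: Mod_supp.
  apply: (SuppW _ (Supp_mul hE (Supp_prod (K:=K) hall))) => e.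
  by move/mulP_DLD; rewrite hs add1n.
Qed.

Lemma claim (K : fieldType) lam i j (hlam : is_partition lam) (hij : cell lam i j) k :
  forall b bs, size bs = k -> cell lam i b -> (b <= k.+1)%N -> all (cell lam i) bs ->
  Mod (Tv K lam i b * \prod_(y <- bs) Tv K lam i y) (DL (ncells lam) (cidx lam i j) k.+1).
Proof.
elim: k => [|k IH] b bs hs hb hbk hall; apply: (step hlam hij hs hb hbk hall).
  by move=> x c' rest hbs; rewrite hbs in hs.
move=> x c' rest hbs hx hxb; subst bs.
apply: IH => //; first by case: hs.
  lia.
by case/andP: hall.
Qed.

Lemma last_true (P : pred nat) n l : (l < n)%N -> P l ->
  exists m, [/\ (l <= m)%N, (m < n)%N, P m & forall m', (m < m')%N -> (m' < n)%N -> ~~ P m'].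
Proof.
elim: n => [|n IH] hl hP; first by rewrite ltn0 in hl.
case hPn: (P n).
  exists n; split => //; first lia.
have hl' : (l < n)%N.
  rewrite ltnS leq_eqVlt in hl; case/orP: hl => // /eqP hln.
  by rewrite hln hPn in hP.
case: (IH hl' hP) => m [h1 h2 h3 h4]; exists m; split => //; first lia.
move=> m' hm hm'; rewrite ltnS leq_eqVlt in hm'; case/orP: hm' => [/eqP ->|hm'].
  by rewrite hPn.
exact: h4.
Qed.

Lemma prod_nseq (R : comNzRingType) (F : nat -> R) m x :
  \prod_(y <- nseq m x) F y = F x ^+ m.
Proof. elim: m => [|m IH]; by rewrite ?big_nil ?expr0 // big_cons IH exprS. Qed.

Lemma mcoef_sub (R : comNzRingType) n (p f : mpoly R n) e :
  mcoef f e = mcoef p e - mcoef (p - f) e.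
Proof. by rewrite mcoefB opprB addrCA subrr addr0. Qed.

Unset Implicit Arguments.
Set Strict Implicit.
Theorem lemma5p3 (K : fieldType) (lam : seq nat) (hlam : is_partition lam)
  (i j : nat) (hij : cell lam i j) :
  initial_ideal (I2L K lam) (Tv K lam i j ^+ j).
Proof.
have hij' := hij; case/and4P: hij' => h1 h2 h3 h4.
set n := ncells lam; set c := cidx lam i j.
have hc : (c < n)%N by apply: cidx_lt.
have := @claim K lam i j hlam hij j.-1 j (nseq j.-1 j) (size_nseq _ _) hij.
rewrite prednK // leqnn all_nseq hij orbT prod_nseq -exprS prednK //.
move=> /(_ erefl erefl) [f [hf hS]].
apply: ideal_el; exists f => //.
have mT : forall e, mcoef (Tv K lam i j ^+ j) e = if eqon n e (e0 c j) then 1 else 0.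
  by move=> e; apply: mcoef_mvarX.
exists (e0 c j); split.
- by move=> l hl; rewrite /e0; case: eqP => // hlc; exfalso; lia.
- rewrite (mcoef_sub (Tv K lam i j ^+ j)) mT.
  have -> : eqon n (e0 c j) (e0 c j) by apply/eqonP.
  case: (boolP (mcoef (Tv K lam i j ^+ j - f) (e0 c j) == 0)) => [/eqP->|/hS].
    by rewrite subr0 oner_neq0.
  case=> _ [l [hl1 hl2 hl3]]; exfalso; move: hl3; rewrite /e0.
  by case: eqP => // hlc; exfalso; lia.
- rewrite /mmono (bigD1 (Ordinal hc)) //= /e0 eqxx big1 ?mulr1 //.
  move=> k hk; case: eqP => [hkc|]; last by rewrite expr0.
  by case/eqP: hk; apply: val_inj.
- move=> e' _ hne [k hk hk'].
  move: hne; rewrite (mcoef_sub (Tv K lam i j ^+ j)) mT.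
  have -> : eqon n e' (e0 c j) = false.
    by apply/negP => /eqonP h; apply: hk'; apply: h.
  rewrite sub0r oppr_eq0 => /hS [hdeg [l [hl1 hl2 hl3]]].
  right; split; first by rewrite hdeg mdeg_e0.
  have [m [hm1 hm2 hm3 hm4]] := last_true (P := fun l => (0 < e' l)%N) hl2 hl3.
  exists m; split => //.
    by rewrite /e0; case: eqP => // hmc; exfalso; lia.
  move=> l' hl' hl'n; have := hm4 _ hl' hl'n; rewrite /e0 lt0n negbK => /eqP->.
  by case: eqP => // hlc; exfalso; lia.
Qed.
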